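(* Let $D$ be a non-commutative division ring with center $F$, let $M$ be an irreducible metabelian locally solvable maximal subgroup of $D^*$, and let $A$ be a maximal abelian normal subgroup of $M$. If $N$ is a subgroup of $M$ with $A\subsetneq N$, then $N$ is irreducible.
   Context: $D^*$ is the multiplicative group of $D$; maximal subgroup = proper subgroup maximal among proper subgroups. A subgroup $G\le D^*$ is irreducible if the division subring $F(G)$ generated by $F\cup G$ equals $D$. Locally solvable: every finitely generated subgroup solvable. Metabelian: the derived subgroup is abelian. A maximal abelian normal subgroup is an abelian normal subgroup not properly contained in another abelian normal subgroup. *)

(* Defs.v *)
(* A division ring D is a unitRingType in which every nonzero
   element is a unit. Subsets/subgroups of D are predicates D -> Prop. *)
From HB Require Import structures.
From mathcomp Require Import all_boot all_algebra.
Set Implicit Arguments. Unset Strict Implicit. Unset Printing Implicit Defensive.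
Import GRing.Theory.
Local Open Scope ring_scope.

Section DivRingGroups.
Variable R : unitRingType.

Definition is_divring : Prop := forall x : R, x != 0 -> x \is a GRing.unit.

Definition subset_pr (A B : R -> Prop) : Prop := forall x, A x -> B x.
Definition seteq_pr (A B : R -> Prop) : Prop := forall x, A x <-> B x.

Definition units_set : R -> Prop := fun x => x \is a GRing.unit.

Definition is_subgroup (G : R -> Prop) : Prop :=
  [/\ subset_pr G units_set, G 1,
      (forall x y, G x -> G y -> G (x * y)) &
      (forall x, G x -> G x^-1)].

Definition center : R -> Prop := fun x => forall y, x * y = y * x.

Definition is_divsubring (S : R -> Prop) : Prop :=
  [/\ S 0, S 1, (forall x y, S x -> S y -> S (x - y)),
      (forall x y, S x -> S y -> S (x * y)) &
      (forall x, S x -> x != 0 -> S x^-1)].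

Definition divsubring_gen (S : R -> Prop) : R -> Prop :=
  fun x => forall T, is_divsubring T -> subset_pr S T -> T x.

(* G is irreducible: F(G) = D *)
Definition irreducible (G : R -> Prop) : Prop :=
  forall x, divsubring_gen (fun y => center y \/ G y) x.

Definition gen_subgroup (S : R -> Prop) : R -> Prop :=
  fun x => forall H, is_subgroup H -> subset_pr S H -> H x.

Definition commutator (x y : R) : R := x^-1 * y^-1 * x * y.

Definition derived (G : R -> Prop) : R -> Prop :=
  gen_subgroup (fun z => exists x y, [/\ G x, G y & z = commutator x y]).

Fixpoint derived_iter (n : nat) (G : R -> Prop) : R -> Prop :=
  if n is n'.+1 then derived (derived_iter n' G) else G.

Definition solvable_grp (G : R -> Prop) : Prop :=
  exists n, forall x, derived_iter n G x -> x = 1.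

Definition locally_solvable (G : R -> Prop) : Prop :=
  forall s : seq R, (forall x, x \in s -> G x) ->
    solvable_grp (gen_subgroup (fun x => x \in s)).

Definition abelian_set (G : R -> Prop) : Prop :=
  forall x y, G x -> G y -> x * y = y * x.

Definition metabelian (G : R -> Prop) : Prop := abelian_set (derived G).

Definition normal_sub (H G : R -> Prop) : Prop :=
  [/\ is_subgroup H, subset_pr H G &
      forall g h, G g -> H h -> H (g^-1 * h * g)].

Definition maximal_subgroup (M : R -> Prop) : Prop :=
  [/\ is_subgroup M, ~ subset_pr units_set M &
      forall H, is_subgroup H -> subset_pr M H -> ~ subset_pr units_set H ->
        seteq_pr H M].

Definition max_abelian_normal (A M : R -> Prop) : Prop :=
  [/\ normal_sub A M, abelian_set A &
      forall B, normal_sub B M -> abelian_set B -> subset_pr A B -> seteq_pr B A].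

End DivRingGroups.

(* Main.v *)
Require Import Defs.
From mathcomp Require Import all_boot all_algebra.
From Stdlib Require Import Classical.
Set Implicit Arguments. Unset Strict Implicit. Unset Printing Implicit Defensive.
Import GRing.Theory.
Local Open Scope ring_scope.

Section S.
Variable R : unitRingType.
Hypothesis hdiv : is_divring R.

Lemma unit_neq0 (x : R) : x \is a GRing.unit -> x != 0.
Proof. by apply: contraTneq => ->; rewrite unitr0. Qed.

Lemma addsub (p q r s : R) : p + q = r + s -> p - r = s - q.
Proof.
move=> h; have -> : p = r + s - q by rewrite -h addrK.
by rewrite addrAC [r + s]addrC addrK.
Qed.

Lemma sep (a a1 a2 b : R) : a1 * b = b * a -> a2 * (1 + b) = (1 + b) * a ->
  (a1 - a2) * b = a2 - a.
Proof.
move=> h1; rewrite mulrDr mulrDl mulr1 mul1r -h1 => h2.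
by rewrite mulrBl; symmetry; apply: addsub.
Qed.

Lemma sg_unit (G : R -> Prop) x : is_subgroup G -> G x -> x \is a GRing.unit.
Proof. by case=> h _ _ _ /h. Qed.

Lemma units_sg : is_subgroup (@units_set R).
Proof.
split => //; first exact: unitr1.
- by move=> x y hx hy; rewrite /units_set unitrMl.
- by move=> x hx; rewrite /units_set unitrV.
Qed.

Lemma gen_sg (S : R -> Prop) : (forall x, S x -> x \is a GRing.unit) ->
  is_subgroup (gen_subgroup S).
Proof.
move=> hS; split.
- by move=> x hx; apply: (hx); [exact: units_sg | exact: hS].
- by move=> H [].
- by move=> x y hx hy H hH hSH; case: (hH) => _ _ hm _; apply: (hm); [apply: (hx)|apply: (hy)].
- by move=> x hx H hH hSH; case: (hH) => _ _ _ hi; apply: (hi); apply: (hx).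
Qed.

Lemma conj_mul (m u v : R) : m \is a GRing.unit ->
  (m^-1 * u * m) * (m^-1 * v * m) = m^-1 * (u * v) * m.
Proof. by move=> hm; rewrite !mulrA mulrK. Qed.

Lemma conj_inv (m a : R) : m \is a GRing.unit -> m^-1 * (m * a * m^-1) * m = a.
Proof. by move=> hm; rewrite !mulrA mulVr // mul1r mulrVK. Qed.

Lemma conj_comm (m x a : R) : m \is a GRing.unit ->
  x * (m * a * m^-1) = (m * a * m^-1) * x -> (m^-1 * x * m) * a = a * (m^-1 * x * m).
Proof.
move=> hm h.
transitivity (m^-1 * (x * (m * a * m^-1)) * m); first by rewrite -conj_mul // conj_inv.
by rewrite h -conj_mul // conj_inv.
Qed.

Lemma comm_der (G : R -> Prop) x y : is_subgroup G -> G x -> G y ->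
  derived G (commutator x y).
Proof. by move=> _ hx hy H _ hS; apply: (hS); exists x, y. Qed.

Lemma der_sub (G : R -> Prop) x : is_subgroup G -> derived G x -> G x.
Proof.
move=> hG hx; apply: (hx) => //.
case: (hG) => _ _ hm hi.
by move=> z [a [b [ha hb ->]]]; rewrite /commutator; apply: (hm) => //; apply: (hm) => //;
  apply: (hm) => //; apply: (hi).
Qed.

Lemma der_sg (G : R -> Prop) : is_subgroup G -> is_subgroup (derived G).
Proof.
move=> hG; apply: gen_sg => x [a [b [ha hb ->]]].
by apply: (sg_unit hG); apply: der_sub => //; apply: comm_der.
Qed.

Lemma der_conj (G : R -> Prop) g d : is_subgroup G -> G g -> derived G d ->
  derived G (g^-1 * d * g).
Proof.
move=> hG hg hd.
have du : d \is a GRing.unit by apply: (sg_unit hG); apply: der_sub.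
have -> : g^-1 * d * g = d * commutator d g.
  by rewrite /commutator !mulrA mulrV // mul1r.
case: (der_sg hG) => _ _ hm _; apply: (hm) => //.
by apply: comm_der => //; apply: der_sub.
Qed.

Lemma gen_div (S : R -> Prop) : is_divsubring (divsubring_gen S).
Proof.
split.
- by move=> T [].
- by move=> T [].
- by move=> x y hx hy T hT hS; case: (hT) => _ _ h _ _; apply: (h); [apply: (hx)|apply: (hy)].
- by move=> x y hx hy T hT hS; case: (hT) => _ _ _ h _; apply: (h); [apply: (hx)|apply: (hy)].
- by move=> x hx hx0 T hT hS; case: (hT) => _ _ _ _ h; apply: (h) => //; apply: (hx).
Qed.

Lemma gen_in (S : R -> Prop) x : S x -> divsubring_gen S x.
Proof. by move=> hx T _ h; apply: (h). Qed.

Lemma divadd (L : R -> Prop) x y : is_divsubring L -> L x -> L y -> L (x + y).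
Proof.
case=> h0 h1 hs _ _ hx hy.
have hn : L (- y) by rewrite -sub0r; apply: (hs).
by rewrite -[y]opprK; apply: (hs).
Qed.

Lemma gen_conj (S : R -> Prop) m : m \is a GRing.unit ->
  (forall y, S y -> S (m^-1 * y * m)) ->
  forall x, divsubring_gen S x -> divsubring_gen S (m^-1 * x * m).
Proof.
move=> hm hSm x hx; apply: (hx (fun x => divsubring_gen S (m^-1 * x * m))); last by move=> y hy; apply: gen_in; apply: (hSm).
case: (gen_div S) => g0 g1 gs gm gi.
split.
- by rewrite mulr0 mul0r.
- by rewrite mulr1 mulVr.
- by move=> a b ha hb; rewrite mulrBr mulrBl; apply: gs.
- by move=> a b ha hb; rewrite -conj_mul //; apply: gm.
- move=> a ha ha0.
  have au := hdiv ha0.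
  have e : m^-1 * a^-1 * m = (m^-1 * a * m)^-1.
    by rewrite !invrM ?unitrMl ?unitrV // invrK mulrA.
  rewrite e; apply: gi => //; apply: unit_neq0.
  by rewrite !unitrMl ?unitrV.
Qed.

Lemma cent_div (A : R -> Prop) : is_divsubring (fun x => forall a, A a -> x * a = a * x).
Proof.
split.
- by move=> a _; rewrite mul0r mulr0.
- by move=> a _; rewrite mul1r mulr1.
- by move=> x y hx hy a ha; rewrite mulrBl mulrBr hx // hy.
- by move=> x y hx hy a ha; rewrite -mulrA hy // mulrA hx // mulrA.
- by move=> x hx _ a ha; apply/commr_sym; apply: commrV; apply/commr_sym; apply: (hx).
Qed.

End S.

Section S2.
Variable R : unitRingType.
Hypothesis hdiv : is_divring R.

Lemma div0 (L : R -> Prop) : is_divsubring L -> L 0. Proof. by case. Qed.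
Lemma div1 (L : R -> Prop) : is_divsubring L -> L 1. Proof. by case. Qed.
Lemma divB (L : R -> Prop) x y : is_divsubring L -> L x -> L y -> L (x - y).
Proof. by case=> _ _ h _ _; apply: (h). Qed.
Lemma divM (L : R -> Prop) x y : is_divsubring L -> L x -> L y -> L (x * y).
Proof. by case=> _ _ _ h _; apply: (h). Qed.
Lemma divV (L : R -> Prop) x : is_divsubring L -> L x -> x != 0 -> L x^-1.
Proof. by case=> _ _ _ _ h; apply: (h). Qed.

Lemma unitV_neq0 (x : R) : x \is a GRing.unit -> x^-1 != 0.
Proof. by move=> h; apply: unit_neq0; rewrite unitrV. Qed.

Lemma CBH (L : R -> Prop) : is_divsubring L ->
  (forall y x, y \is a GRing.unit -> L x -> L (y^-1 * x * y)) ->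
  (forall x, L x -> center x) \/ (forall x, L x).
Proof.
move=> hL hn; case: (classic (forall x, L x)) => hall; [by right | left].
have [b0 hb0] : exists b, ~ L b by apply: not_all_ex_not.
have key : forall a b, L a -> ~ L b -> a * b = b * a.
  move=> a b ha hb.
  have b0' : b != 0 by apply/eqP => e; apply: (hb); rewrite e; apply: (div0 hL).
  have b1 : 1 + b != 0.
    apply/eqP => e; apply: (hb).
    have -> : b = 0 - 1 by rewrite -e [1 + b]addrC addrK.
    by apply: (divB hL); [apply: (div0 hL) | apply: (div1 hL)].
  have ub := hdiv b0'; have ub1 := hdiv b1.
  have h1 : (b * a * b^-1) * b = b * a by rewrite mulrVK.
  have h2 : ((1 + b) * a * (1 + b)^-1) * (1 + b) = (1 + b) * a by rewrite mulrVK.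
  have La1 : L (b * a * b^-1) by have := hn b^-1 a; rewrite invrK; apply => //; rewrite unitrV.
  have La2 : L ((1 + b) * a * (1 + b)^-1).
    by have := hn (1 + b)^-1 a; rewrite invrK; apply => //; rewrite unitrV.
  have e := sep h1 h2.
  case: (eqVneq (b * a * b^-1) ((1 + b) * a * (1 + b)^-1)) => [e12 | n12].
  - move: e; rewrite e12 subrr mul0r => /esym/eqP; rewrite subr_eq0 => /eqP e2.
    by rewrite -h1 e12 e2.
  - exfalso; apply: (hb).
    have -> : b = (b * a * b^-1 - (1 + b) * a * (1 + b)^-1)^-1 * ((1 + b) * a * (1 + b)^-1 - a).
      by rewrite -e mulKr // hdiv // subr_eq0.
    apply: (divM hL) => //; last by apply: (divB hL).
    by apply: (divV hL) => //; [apply: (divB hL) | rewrite subr_eq0].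
move=> a ha z; case: (classic (L z)) => hz; last exact: key.
have hbz : ~ L (b0 + z).
  by move=> h; apply: (hb0); rewrite -(addrK z b0); apply: (divB hL).
have := key _ _ ha hbz; rewrite mulrDr mulrDl (key _ _ ha hb0).
by move/addrI.
Qed.

Lemma NL (M L : R -> Prop) :
  is_subgroup M ->
  (forall H, is_subgroup H -> subset_pr M H -> ~ subset_pr (@units_set R) H -> seteq_pr H M) ->
  is_divsubring L ->
  (forall m x, M m -> L x -> L (m^-1 * x * m)) ->
  [\/ (forall x, L x -> x != 0 -> M x), (forall x, L x -> center x) | forall x, L x].
Proof.
move=> hM hmax hL hn.
have Mu := fun x => @sg_unit R M x hM.
case: (hM) => _ hM1 hMm hMi.
pose H := fun y => exists l m, [/\ L l, l != 0, M m & y = l * m].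
have hH : is_subgroup H.
  split.
  - move=> y [l [m [hl hl0 hm ->]]]; rewrite /units_set unitrMl; [exact: hdiv | exact: Mu].
  - by exists 1, 1; split; [apply: (div1 hL) | apply: oner_neq0 | exact: hM1 | rewrite mulr1].
  - move=> y1 y2 [l1 [m1 [hl1 hl10 hm1 ->]]] [l2 [m2 [hl2 hl20 hm2 ->]]].
    have um1 := Mu _ hm1.
    exists (l1 * (m1 * l2 * m1^-1)), (m1 * m2); split.
    + apply: (divM hL) => //; have := hn m1^-1 l2; rewrite invrK; apply => //; exact: hMi.
    + by apply: unit_neq0; rewrite unitrMl ?unitrMl ?unitrMr ?unitrV //; apply: hdiv.
    + exact: hMm.
    + by rewrite !mulrA mulrVK.
  - move=> y [l [m [hl hl0 hm ->]]].
    have um := Mu _ hm; have ul := hdiv hl0.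
    exists (m^-1 * l^-1 * m), m^-1; split.
    + by apply: (hn) => //; apply: (divV hL).
    + by apply: unit_neq0; rewrite unitrMl // unitrMr ?unitrV.
    + exact: hMi.
    + by rewrite invrM // mulrK.
have hMH : subset_pr M H by move=> m hm; exists 1, m; split => //;
  [apply: (div1 hL) | apply: oner_neq0 | rewrite mul1r].
case: (classic (subset_pr (@units_set R) H)) => hU.
- have hn' : forall y x, y \is a GRing.unit -> L x -> L (y^-1 * x * y).
    move=> y x hy hx; have [l [m [hl hl0 hm ey]]] := hU y hy.
    have um := Mu _ hm; have ul := hdiv hl0.
    have -> : y^-1 * x * y = m^-1 * (l^-1 * x * l) * m.
      by rewrite ey invrM // !mulrA.
    by apply: (hn) => //; apply: (divM hL) => //; apply: (divM hL) => //; apply: (divV hL).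
  by case: (CBH hL hn') => h; [apply: Or32 | apply: Or33].
- apply: Or31 => x hx hx0; have := hmax H hH hMH hU x; case => h _; apply: (h).
  by exists x, 1; split => //; rewrite mulr1.
Qed.

Lemma metab_comm (M L : R -> Prop) : is_subgroup M -> abelian_set (derived M) ->
  is_divsubring L -> (forall x, L x -> x != 0 -> M x) ->
  forall x y, L x -> L y -> x * y = y * x.
Proof.
move=> hM hab hL hLM.
case: (hM) => _ hM1 hMm hMi.
have stepA : forall x y b, L x -> L y -> x != 0 -> y != 0 -> L b ->
    GRing.comm (commutator x y) b.
  move=> x y b hx hy hx0 hy0 hb.
  set c := commutator x y.
  have hc : derived M c by apply: comm_der => //; apply: (hLM).
  case: (eqVneq b 0) => [-> | b0]; first by rewrite /GRing.comm mulr0 mul0r.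
  case: (eqVneq (1 + b) 0) => [e | b1].
    have -> : b = -1 by apply/eqP; rewrite -addr_eq0 addrC e.
    by rewrite /GRing.comm mulrN1 mulN1r.
  have ub := hdiv b0; have ub1 := hdiv b1.
  have hb1 : L (1 + b) by apply: (divadd hL) => //; apply: (div1 hL).
  have h1 : (b * c * b^-1) * b = b * c by rewrite mulrVK.
  have h2 : ((1 + b) * c * (1 + b)^-1) * (1 + b) = (1 + b) * c by rewrite mulrVK.
  have D1 : derived M (b * c * b^-1).
    by have := der_conj (g := b^-1) hM; rewrite invrK; apply => //; apply: (hMi); apply: (hLM).
  have D2 : derived M ((1 + b) * c * (1 + b)^-1).
    by have := der_conj (g := (1 + b)^-1) hM; rewrite invrK; apply => //; apply: (hMi); apply: (hLM).
  have e := sep h1 h2.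
  case: (eqVneq (b * c * b^-1) ((1 + b) * c * (1 + b)^-1)) => [e12 | n12].
  - move: e; rewrite e12 subrr mul0r => /esym/eqP; rewrite subr_eq0 => /eqP e2.
    by rewrite /GRing.comm -h1 e12 e2.
  - have -> : b = (b * c * b^-1 - (1 + b) * c * (1 + b)^-1)^-1 * ((1 + b) * c * (1 + b)^-1 - c).
      by rewrite -e mulKr // hdiv // subr_eq0.
    apply: commrM; first apply: commrV; apply: commrB;
      try (by apply: hab); exact: commrr.
move=> x y hx hy.
case: (eqVneq x 0) => [-> | x0]; first by rewrite mulr0 mul0r.
case: (eqVneq y 0) => [-> | y0]; first by rewrite mulr0 mul0r.
case: (eqVneq (x + 1) 0) => [e | x1].
  have -> : x = -1 by apply/eqP; rewrite -addr_eq0 e.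
  by rewrite mulrN1 mulN1r.
have ux := hdiv x0; have uy := hdiv y0; have ux1 := hdiv x1.
have hx1 : L (x + 1) by apply: (divadd hL) => //; apply: (div1 hL).
set c := commutator x y; set c' := commutator (x + 1) y.
have hc : y^-1 * x * y = x * c by rewrite /c /commutator !mulrA mulrV // mul1r.
have hc' : y^-1 * (x + 1) * y = (x + 1) * c'.
  by rewrite /c' /commutator !mulrA mulrV // mul1r.
move: hc'; rewrite mulrDr mulrDl mulr1 mulVr // hc mulrDl mul1r => /addsub.
rewrite -mulrBr => e.
have cy : GRing.comm y c by apply/commr_sym/stepA.
have cy' : GRing.comm y c' by apply/commr_sym/stepA.
case: (eqVneq c c') => [ecc | ncc].
- move: e; rewrite ecc subrr mulr0 => /esym/eqP; rewrite subr_eq0 => /eqP e1.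
  have : y * (y^-1 * x * y) = y * x by rewrite hc ecc e1 mulr1.
  by rewrite !mulrA mulrV // mul1r.
- have ex : x = (c' - 1) * (c - c')^-1 by rewrite -e mulrK // hdiv // subr_eq0.
  have : GRing.comm y x.
    by rewrite ex; apply: commrM; [apply: commrB | apply: commrV; apply: commrB];
      rewrite // /GRing.comm mulr1 mul1r.
  by move=> h; rewrite /GRing.comm in h; rewrite h.
Qed.

End S2.

Lemma unit3 (R : unitRingType) (m x : R) : m \is a GRing.unit -> x \is a GRing.unit ->
  (m^-1 * x * m) \is a GRing.unit.
Proof. by move=> hm hx; rewrite unitrMl // unitrMr // unitrV. Qed.

Unset Implicit Arguments.

Theorem proposition2p7 (R : unitRingType) (hdiv : is_divring R)
  (hnc : exists x y : R, x * y != y * x)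
  (M A N : R -> Prop)
  (hMmax : maximal_subgroup M) (hMirr : irreducible M)
  (hMmet : metabelian M) (hMls : locally_solvable M)
  (hA : max_abelian_normal A M)
  (hN : is_subgroup N) (hNM : subset_pr N M)
  (hAN : subset_pr A N) (hNA : ~ subset_pr N A) :
  irreducible N.
Proof.
case: hMmax => hM _ hMmaxi.
case: hA => [[hAsg hAM hAn] hAab hAmax].
have Mu : forall x, M x -> x \is a GRing.unit := fun x => sg_unit hM.
have Au : forall x, A x -> x \is a GRing.unit := fun x => sg_unit hAsg.
case: (hM) => _ hM1 hMm hMi.
case: (hAsg) => _ hA1 hAm hAi.
have hDM : forall d, derived M d -> M d := fun d => der_sub hM.
have hDsg := der_sg hM.
case: (hDsg) => _ hD1 hDm hDi.
have hDconj : forall g d, M g -> derived M d -> derived M (g^-1 * d * g).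
  by move=> g d; apply: der_conj.
have hAconj' : forall m a, M m -> A a -> A (m * a * m^-1).
  by move=> m a hm ha; have := hAn m^-1 a; rewrite invrK; apply => //; apply: (hMi).
have hLstar : forall L : R -> Prop, is_divsubring L ->
    (forall m x, M m -> L x -> L (m^-1 * x * m)) ->
    (forall x, L x -> x != 0 -> M x) -> (forall a, A a -> L a) ->
    forall x, L x -> x != 0 -> A x.
  move=> L hL hLn hLM hAL x hx hx0.
  have hcomm := metab_comm hdiv hM hMmet hL hLM.
  pose B := fun x => L x /\ x != 0.
  have hB : normal_sub B M.
    split.
    - split.
      + by move=> y [_ /hdiv].
      + by split; [apply: (div1 hL) | apply: oner_neq0].
      + move=> y z [hy hy0] [hz hz0]; split; first exact: (divM hL).
        by apply: unit_neq0; rewrite unitrMl hdiv.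
      + move=> y [hy hy0]; split; first exact: (divV hL).
        by apply: unitV_neq0; apply: (hdiv).
    - by move=> y [hy hy0]; apply: (hLM).
    - move=> g h hg [hh hh0]; split; first exact: hLn.
      by apply: unit_neq0; apply: unit3; [exact: Mu | exact: hdiv].
  have hBab : abelian_set B by move=> y z [hy _] [hz _]; apply: (hcomm).
  have hAB : subset_pr A B by move=> a ha; split; [apply: (hAL) | apply: unit_neq0; apply: Au].
  by case: (hAmax B hB hBab hAB x) => h _; apply: (h).
pose C := fun x => forall a, A a -> x * a = a * x.
have hC : is_divsubring C := cent_div A.
have hCn : forall m x, M m -> C x -> C (m^-1 * x * m).
  move=> m x hm hx a ha; apply: conj_comm; first exact: Mu.
  by apply: (hx); apply: (hAconj').
have hDC : forall d a, derived M d -> A a -> d * a = a * d.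
  case: (NL hdiv hM hMmaxi hC hCn) => [hCM | hCc | hCall].
  - have hCA := hLstar C hC hCn hCM (fun a ha => fun a' ha' => hAab a a' ha ha').
    move=> d a hd ha.
    case: (eqVneq (a + 1) 0) => [e | a1].
      have -> : a = -1 by apply/eqP; rewrite -addr_eq0 e.
      by rewrite mulrN1 mulN1r.
    have ud := Mu _ (hDM _ hd).
    have hT : forall a, A a -> A (d * a * d^-1 * a^-1) /\ derived M (d * a * d^-1 * a^-1).
      move=> a' ha'; split.
      + by apply: (hAm); [apply: (hAconj'); [apply: (hDM)|] | apply: (hAi)].
      + have -> : d * a' * d^-1 * a'^-1 = d * ((a'^-1)^-1 * d^-1 * a'^-1).
          by rewrite invrK !mulrA.
        apply: (hDm) => //; apply: (hDconj); first by apply: (hMi); apply: (hAM).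
        exact: hDi.
    have ha1 : A (a + 1).
      apply: (hCA); last exact: a1.
      by apply: (divadd hC); [move=> a' ha'; apply: (hAab) | apply: (div1 hC)].
    have ua := Au _ ha; have ua1 := Au _ ha1.
    have [tA tD] := hT a ha; have [sA sD] := hT _ ha1.
    set t := d * a * d^-1 * a^-1 in tA tD.
    set s := d * (a + 1) * d^-1 * (a + 1)^-1 in sA sD.
    have et : t * a = d * a * d^-1 by rewrite /t mulrVK.
    have es : s * (a + 1) = d * a * d^-1 + 1.
      by rewrite /s mulrVK //; rewrite mulrDr mulrDl mulr1 mulrV.
    move: es; rewrite mulrDr mulr1 -et => /esym /addsub; rewrite -mulrBl => e.
    have dt : GRing.comm d t by apply: (hMmet).
    have ds : GRing.comm d s by apply: (hMmet).
    case: (eqVneq t s) => [ets | nts].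
    + move: e; rewrite ets subrr mul0r => /esym/eqP; rewrite subr_eq0 => /eqP e1.
      move: et; rewrite ets e1 mul1r => et.
      by rewrite [in RHS]et mulrVK.
    + have ea : a = (t - s)^-1 * (s - 1) by rewrite -e mulKr // hdiv // subr_eq0.
      have : GRing.comm d a.
        by rewrite ea; apply: commrM; [apply: commrV; apply: commrB | apply: commrB];
          rewrite // /GRing.comm mulr1 mul1r.
      done.
  - move=> d a hd ha; symmetry; apply: (hCc a) => a' ha'; exact: hAab.
  - by move=> d a hd ha; apply: (hCall d).
have hDA : forall d, derived M d -> A d.
  pose B := fun x => exists d a, [/\ derived M d, A a & x = d * a].
  have mulB : forall d a d' a', derived M d' -> A a ->
      (d * a) * (d' * a') = (d * d') * (a * a').
    by move=> d a d' a' hd' ha; rewrite -!mulrA; congr (d * _); rewrite !mulrA (hDC _ _ hd' ha).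
  have hB : normal_sub B M.
    split.
    - split.
      + move=> y [d [a [hd ha ->]]]; rewrite /units_set unitrMl; last exact: Au.
        by apply: Mu; apply: (hDM).
      + by exists 1, 1; split => //; rewrite mulr1.
      + move=> y z [d [a [hd ha ->]]] [d' [a' [hd' ha' ->]]].
        exists (d * d'), (a * a'); split; [exact: hDm | exact: hAm | exact: mulB].
      + move=> y [d [a [hd ha ->]]].
        exists d^-1, a^-1; split; [exact: hDi | exact: hAi |].
        have ud : d \is a GRing.unit by apply: Mu; apply: (hDM).
        rewrite invrM //; last exact: Au.
        by symmetry; apply: (hDC); [apply: (hDi) | apply: (hAi)].
    - by move=> y [d [a [hd ha ->]]]; apply: (hMm); [apply: (hDM) | apply: (hAM)].
    - move=> g y hg [d [a [hd ha ->]]].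
      exists (g^-1 * d * g), (g^-1 * a * g); split; [exact: hDconj | exact: hAn |].
      by rewrite conj_mul // Mu.
  have hBab : abelian_set B.
    move=> y z [d [a [hd ha ->]]] [d' [a' [hd' ha' ->]]].
    by rewrite mulB // [RHS]mulB // (hMmet d d') // (hAab a a').
  have hAB : subset_pr A B by move=> a ha; exists 1, a; split => //; rewrite mul1r.
  move=> d hd; case: (hAmax B hB hBab hAB d) => h _; apply: (h).
  by exists d, 1; split => //; rewrite mulr1.
case: (hN) => _ hN1 hNm hNi.
have hNn : forall m n, M m -> N n -> N (m^-1 * n * m).
  move=> m n hm hn.
  have -> : m^-1 * n * m = n * commutator n m.
    by rewrite /commutator !mulrA mulrV ?mul1r // (sg_unit hN).
  apply: (hNm) => //; apply: (hAN); apply: (hDA); apply: comm_der => //; exact: hNM.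
pose S := fun y => center y \/ N y.
pose L := divsubring_gen S.
have hL : is_divsubring L := gen_div S.
have hSL : forall y, S y -> L y := fun y => gen_in (S:=S) (x:=y).
have hLn : forall m x, M m -> L x -> L (m^-1 * x * m).
  move=> m x hm; apply: gen_conj => //; first exact: Mu.
  move=> y [hy | hy]; last by right; apply: (hNn).
  left; suff -> : m^-1 * y * m = y by [].
  rewrite -mulrA hy mulrA mulVr ?mul1r //; exact: Mu.
case: (NL hdiv hM hMmaxi hL hLn) => [hLM | hLc | hLall].
- exfalso; apply: (hNA) => n hn.
  apply: (hLstar L hL hLn hLM) => //.
  + by move=> a ha; apply: (hSL); right; apply: (hAN).
  + by apply: (hSL); right.
  + by apply: unit_neq0; apply: (sg_unit hN).
- exfalso; apply: (hNA) => n hn.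
  have hNab : abelian_set N by move=> x y hx hy; apply: (hLc x); apply: (hSL); right.
  by case: (hAmax N (And3 hN hNM hNn) hNab hAN n) => h _; apply: (h).
- exact: hLall.
Qed.
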